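(* Let $R$ be a ring with identity and $a,b,c,y\in R$. (i) If $y$ is the annihilator $(b,c)$-inverse of $a$, then $y$ is both a right annihilator and a left annihilator $(b,c)$-inverse of $a$. (ii) If $y$ is both a left $(b,c)$-inverse and a left annihilator $(b,c)$-inverse of $a$, then $y$ is the annihilator $(b,c)$-inverse of $a$. (iii) If $y$ is both a right $(b,c)$-inverse and a right annihilator $(b,c)$-inverse of $a$, then $y$ is the annihilator $(b,c)$-inverse of $a$. Moreover, if $b$ and $c$ are regular, then the converses of (i), (ii) and (iii) all hold.
   Context: An element $x$ is regular if $x=xzx$ for some $z\in R$. For $x\in R$: $xR=\{xr:r\in R\}$, $Rx=\{rx:r\in R\}$, $x^\circ=\{r: xr=0\}$, ${}^\circ x=\{r: rx=0\}$. $y$ is the annihilator $(b,c)$-inverse of $a$ if $yay=y$, ${}^\circ b={}^\circ y$ and $y^\circ=c^\circ$. $y$ is a left $(b,c)$-inverse of $a$ if $Ry\subseteq Rc$ and $yab=b$; a right $(b,c)$-inverse if $yR\subseteq bR$ and $cay=c$; a right annihilator $(b,c)$-inverse if $c^\circ\subseteq y^\circ$ and $yab=b$; a left annihilator $(b,c)$-inverse if ${}^\circ b\subseteq {}^\circ y$ and $cay=c$. *)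

(* Defs.v *)
(* R is an arbitrary (possibly non-commutative) ring with 1
   (pzRingType: the zero ring is not excluded). *)
From mathcomp Require Import all_boot all_algebra.
Set Implicit Arguments. Unset Strict Implicit. Unset Printing Implicit Defensive.
Import GRing.Theory.
Local Open Scope ring_scope.

Section BCInverses.
Variable R : pzRingType.

Definition regular (x : R) : Prop := exists z : R, x = x * z * x.

Definition rideal (x : R) : R -> Prop := fun t => exists r, t = x * r.
Definition lideal (x : R) : R -> Prop := fun t => exists r, t = r * x.
Definition rann (x : R) : R -> Prop := fun r => x * r = 0.
Definition lann (x : R) : R -> Prop := fun r => r * x = 0.

Definition subsetP (A B : R -> Prop) : Prop := forall t, A t -> B t.
Definition eqsetP (A B : R -> Prop) : Prop := forall t, A t <-> B t.

Definition ann_bc_inverse (a b c y : R) : Prop :=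
  y * a * y = y /\ eqsetP (lann b) (lann y) /\ eqsetP (rann y) (rann c).

Definition left_bc_inverse (a b c y : R) : Prop :=
  subsetP (lideal y) (lideal c) /\ y * a * b = b.

Definition right_bc_inverse (a b c y : R) : Prop :=
  subsetP (rideal y) (rideal b) /\ c * a * y = c.

Definition right_ann_bc_inverse (a b c y : R) : Prop :=
  subsetP (rann c) (rann y) /\ y * a * b = b.

Definition left_ann_bc_inverse (a b c y : R) : Prop :=
  subsetP (lann b) (lann y) /\ c * a * y = c.

End BCInverses.

(* Main.v *)
Require Import Defs.
From mathcomp Require Import all_boot all_algebra.
Import GRing.Theory.
Local Open Scope ring_scope.

Lemma rz (R : pzRingType) (x u : R) : x * (1 - u) = 0 -> x = x * u.
Proof. by move/eqP; rewrite mulrBr mulr1 subr_eq0 => /eqP. Qed.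
Lemma lz (R : pzRingType) (x u : R) : (1 - u) * x = 0 -> x = u * x.
Proof. by move/eqP; rewrite mulrBl mul1r subr_eq0 => /eqP. Qed.
Lemma regr (R : pzRingType) (x z : R) : x = x * z * x -> x * (1 - z * x) = 0.
Proof. by move=> H; rewrite mulrBr mulr1 mulrA -H subrr. Qed.
Lemma regl (R : pzRingType) (x z : R) : x = x * z * x -> (1 - x * z) * x = 0.
Proof. by move=> H; rewrite mulrBl mul1r -H subrr. Qed.

Theorem proposition2p11 (R : pzRingType) (a b c y : R) :
  (* (i) *)
  (ann_bc_inverse a b c y ->
     right_ann_bc_inverse a b c y /\ left_ann_bc_inverse a b c y) /\
  (* (ii) *)
  (left_bc_inverse a b c y /\ left_ann_bc_inverse a b c y ->
     ann_bc_inverse a b c y) /\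
  (* (iii) *)
  (right_bc_inverse a b c y /\ right_ann_bc_inverse a b c y ->
     ann_bc_inverse a b c y) /\
  (* converses when b and c are regular *)
  (regular b -> regular c ->
     (right_ann_bc_inverse a b c y /\ left_ann_bc_inverse a b c y ->
        ann_bc_inverse a b c y) /\
     (ann_bc_inverse a b c y ->
        left_bc_inverse a b c y /\ left_ann_bc_inverse a b c y) /\
     (ann_bc_inverse a b c y ->
        right_bc_inverse a b c y /\ right_ann_bc_inverse a b c y)).
Proof.
have partI : ann_bc_inverse a b c y ->
     right_ann_bc_inverse a b c y /\ left_ann_bc_inverse a b c y.
  move=> [yay [Hl Hr]].
  have yab : y * a * b = b.
    apply/esym; apply: lz; apply/(proj2 (Hl _)).
    by rewrite /lann mulrBl mul1r yay subrr.
  have cay : c * a * y = c.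
    apply/esym; rewrite -mulrA; apply: rz; apply/(proj1 (Hr _)).
    by rewrite /rann mulrBr mulr1 mulrA yay subrr.
  split; split => // t; [by move/(proj2 (Hr t)) | by move/(proj1 (Hl t))].
split; first exact: partI.
split.
  move=> [[Hs yab] [Hlb cay]].
  have [r yrc] := Hs y (ex_intro _ 1 (esym (mul1r y))).
  split; first by rewrite {1}yrc -!mulrA (mulrA c a) cay -yrc.
  split => t; split.
  - exact: Hlb.
  - by move=> ty; rewrite /lann -yab !mulrA ty !mul0r.
  - by move=> yt; rewrite /rann -cay -mulrA yt mulr0.
  - by move=> ct; rewrite /rann yrc -mulrA ct mulr0.
split.
  move=> [[Hs cay] [Hrc yab]].
  have [s ybs] := Hs y (ex_intro _ 1 (esym (mulr1 y))).
  split; first by rewrite {2}ybs mulrA yab -ybs.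
  split => t; split.
  - by move=> tb; rewrite /lann ybs mulrA tb mul0r.
  - by move=> ty; rewrite /lann -yab !mulrA ty !mul0r.
  - by move=> yt; rewrite /rann -cay -mulrA yt mulr0.
  - exact: Hrc.
move=> [w bw] [z cz].
split.
  move=> [[Hrc yab] [Hlb cay]].
  have yzc : y = y * z * c by rewrite -mulrA; apply: rz; apply: Hrc; exact: regr.
  split; first by rewrite {1}yzc -!mulrA (mulrA c a) cay mulrA -yzc.
  split => t; split.
  - exact: Hlb.
  - by move=> ty; rewrite /lann -yab !mulrA ty !mul0r.
  - by move=> yt; rewrite /rann -cay -mulrA yt mulr0.
  - exact: Hrc.
split.
  move=> H; have [[Hrc yab] Hla] := partI H; split => //; split => //.
  move=> t [r ->]; exists (r * y * z).
  have yzc : y = y * z * c by rewrite -mulrA; apply: rz; apply: Hrc; exact: regr.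
  by rewrite {1}yzc !mulrA.
move=> H; have [Hra [Hlb cay]] := partI H; split => //; split => //.
move=> t [r ->]; exists (w * y * r).
have ybw : y = b * w * y by apply: lz; apply: Hlb; exact: regl.
by rewrite {1}ybw !mulrA.
Qed.
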